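(* Let $\Lambda=(\Lambda_1,\dots,\Lambda_d)$ be a $d$-partition of $\{1,\dots,N\}$ and consider the associated lumped chain. Then $$\mathbb E^\circ\tau^0_0=\prod_{k=1}^d\sqrt{\frac{\pi}{2}|\Lambda_k|}\,\bigl(1+O(|\Lambda_k|^{-1})\bigr).$$
   Context: Let $(\sigma_N(t))_{t\in\mathbb N}$ be the discrete-time simple random walk on $\{-1,1\}^N$ (jump to each Hamming neighbour with probability $1/N$). For a partition $\Lambda$ of $\{1,\dots,N\}$ into nonempty classes $\Lambda_1,\dots,\Lambda_d$, let $\gamma(\sigma)=(\gamma_1(\sigma),\dots,\gamma_d(\sigma))$ with $\gamma_k(\sigma)=|\Lambda_k|^{-1}\sum_{i\in\Lambda_k}\sigma_i$, and $\Gamma_{N,d}=\gamma(\{-1,1\}^N)$. The lumped chain $X_N(t)=\gamma(\sigma_N(t))$ is a Markov chain on $\Gamma_{N,d}$ with transition probabilities $r_N(x,x+s\frac{2}{|\Lambda_k|}u_k)=\frac{|\Lambda_k|}{N}\frac{1-sx_k}{2}$ ($s\in\{-1,1\}$, $u_k$ the canonical basis of $\mathbb R^d$) and reversible invariant measure $\mathbb Q_N(x)=2^{-N}\prod_{k=1}^d\binom{|\Lambda_k|}{|\Lambda_k|(1+x_k)/2}$. $\mathbb P^\circ,\mathbb E^\circ$ refer to the lumped chain; $\tau^x_J=\inf\{t>0:X_N(t)\in J\}$ for the chain started at $x$. The symbol $0$ denotes a fixed point of $\Gamma_{N,d}$ at which $\mathbb Q_N$ attains its maximum (the origin of $\mathbb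 R^d$ when all $|\Lambda_k|$ are even). *)

(* Defs.v *)
From HB Require Import structures.
From mathcomp Require Import all_boot all_order all_algebra.
From mathcomp Require Import all_classical all_reals all_analysis.
Set Implicit Arguments. Unset Strict Implicit. Unset Printing Implicit Defensive.
Import Order.TTheory GRing.Theory Num.Theory.
Local Open Scope ring_scope.

Section Lumped.
Variables (R : realType) (N d : nat) (lam : 'I_N -> 'I_d).

(* |Lambda_k|, the class Lambda_k = lam^{-1}(k) of the partition *)
Definition csize (k : 'I_d) : nat := #|[set i | lam i == k]|.

(* spin configurations sigma in {-1,1}^N : true = +1, false = -1 *)
Definition spin (b : bool) : R := if b then 1 else -1.

Definition gamma (sg : {ffun 'I_N -> bool}) : {ffun 'I_d -> R} :=
  [ffun k => (\sum_(i | lam i == k) spin (sg i)) / (csize k)%:R].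

(* Q_N(gamma(sigma)) = 2^{-N} prod_k binom(|Lambda_k|, |Lambda_k|(1+x_k)/2);
   |Lambda_k|(1+x_k)/2 is the number of +1 spins of sigma in Lambda_k *)
Definition Qs (sg : {ffun 'I_N -> bool}) : R :=
  (2 ^- N) * \prod_(k < d) ('C(csize k, #|[set i | (lam i == k) && sg i]|))%:R.

(* a move of the lumped chain: (k, s) moves x to x + s (2/|Lambda_k|) u_k *)
Definition stepf (x : {ffun 'I_d -> R}) (m : 'I_d * bool) : {ffun 'I_d -> R} :=
  [ffun j => x j + (if j == m.1 then spin m.2 * (2 / (csize m.1)%:R) else 0)].

Definition rate (x : {ffun 'I_d -> R}) (m : 'I_d * bool) : R :=
  (csize m.1)%:R / N%:R * ((1 - spin m.2 * x m.1) / 2).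

(* states X_1, ..., X_t visited along a sequence of moves started at x *)
Fixpoint walk (x : {ffun 'I_d -> R}) (ms : seq ('I_d * bool)) :
    seq {ffun 'I_d -> R} :=
  match ms with
  | [::] => [::]
  | m :: ms' => stepf x m :: walk (stepf x m) ms'
  end.

Fixpoint pathprob (x : {ffun 'I_d -> R}) (ms : seq ('I_d * bool)) : R :=
  match ms with
  | [::] => 1
  | m :: ms' => rate x m * pathprob (stepf x m) ms'
  end.

(* P°(tau^x_{z} > t) = P°(X_1 <> z, ..., X_t <> z | X_0 = x) *)
Definition tail_prob (x z : {ffun 'I_d -> R}) (t : nat) : R :=
  \sum_(ms : t.-tuple ('I_d * bool))
     pathprob x ms * (if all (fun y => y != z) (walk x ms) then 1 else 0).

(* E° tau^x_{z} = sum_{t >= 0} P°(tau^x_{z} > t)  (in [0, +oo]) *)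
Definition exp_hit (x z : {ffun 'I_d -> R}) : \bar R :=
  (\sum_(t <oo) (tail_prob x z t)%:E)%E.

End Lumped.

(* Main.v *)
Require Import Defs.
From HB Require Import structures.
From mathcomp Require Import all_boot all_order all_algebra.
From mathcomp Require Import all_classical all_reals all_analysis.
From mathcomp Require Import ring lra zify.
Set Implicit Arguments. Unset Strict Implicit. Unset Printing Implicit Defensive.
Import Order.TTheory GRing.Theory Num.Theory.
Import numFieldNormedType.Exports.
Local Open Scope ring_scope.

Section Wallis.
Context {R : realType}.
Local Open Scope classical_set_scope.
Local Notation mu := (@lebesgue_measure R).

Definition Iw (n : nat) : R := \int[mu]_(x in `[0, pi]) (sin x ^+ n).

Lemma contsinX n : continuous (fun x : R => sin x ^+ n).
Proof.
move=> x; apply: (@continuous_comp _ _ _ sin (fun y => y ^+ n)).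
  exact: continuous_sin.
exact: exprn_continuous.
Qed.

Lemma Iw_int n : mu.-integrable `[0, pi] (EFin \o (fun x : R => sin x ^+ n)).
Proof.
apply: continuous_compact_integrable; first exact: segment_compact.
by apply/continuous_subspaceT => x; apply: contsinX.
Qed.

Lemma Iw_red n : (n.+2)%:R * Iw n.+2 = (n.+1)%:R * Iw n.
Proof.
pose F := (@sin R) ^+ n.+1 * cos.
have dF (x : R) : is_derive x (1:R) F ((n.+1)%:R * sin x ^+ n - (n.+2)%:R * sin x ^+ n.+2).
  apply: is_derive_eq.
  rewrite /F /=.
  have := cos2sin2 x. 
  move=> h. rewrite /GRing.scale /=.
  rewrite exprfctE.
  have -> : cos x * (n.+1%:R * sin x ^+ n * cos x) = n.+1%:R * sin x ^+ n * cos x ^+ 2 by ring.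
  rewrite h !exprS -!natr1 expr0; set s := sin x ^+ n. ring.
have cF : continuous F.
  by move=> x; apply/differentiable_continuous/derivable1_diffP; by case: (dF x).
have H0 : \int[mu]_(x in `[0,pi]) ((n.+1)%:R * sin x ^+ n - (n.+2)%:R * sin x ^+ n.+2) = 0.
  rewrite /Rintegral (@continuous_FTC2 _ _ F); last 4 first.
  - exact: pi_gt0.
  - apply/continuous_subspaceT => x.
    apply: cvgB; apply: cvgM; (exact: cvg_cst || exact: contsinX).
  - split.
    + by move=> x _; by case: (dF x).
    + by apply: cvg_at_right_filter; exact: cF.
    + by apply: cvg_at_left_filter; exact: cF.
  - by move=> x _; rewrite derive1E derive_val.
  have FE y : F y = sin y ^+ n.+1 * cos y by rewrite /F exprfctE.
  by rewrite !FE sinpi sin0 expr0n /= !mul0r subrr.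
have ic c k : mu.-integrable `[0, pi] (EFin \o (fun x : R => c * sin x ^+ k)).
  apply: continuous_compact_integrable; first exact: segment_compact.
  apply/continuous_subspaceT => x; apply: cvgM; (exact: cvg_cst || exact: contsinX).
rewrite RintegralB // ?RintegralZl // in H0; try exact: Iw_int.
by move/eqP: H0; rewrite subr_eq0 => /eqP ->.
Qed.

Lemma Iw_cont_int (f : R -> R) : continuous f ->
  mu.-integrable `[0, pi] (EFin \o f).
Proof.
move=> cf; apply: continuous_compact_integrable; first exact: segment_compact.
by apply/continuous_subspaceT => x; apply: cf.
Qed.

Lemma Iw0 : Iw 0 = pi.
Proof.
rewrite /Iw.
under eq_Rintegral do rewrite expr0.
rewrite Rintegral_cst//= lebesgue_measure_itv/= lte_fin pi_gt0/= subr0 mul1r.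
by [].
Qed.

Lemma Iw1 : Iw 1 = 2.
Proof.
rewrite /Iw.
under eq_Rintegral do rewrite expr1.
rewrite /Rintegral (@continuous_FTC2 _ _ (- cos)) ?pi_gt0//.
- have E (y : R) : (- cos) y = - cos y by [].
  by rewrite -EFinB /= !E cos0 cospi !opprK.
- exact/continuous_subspaceT/continuous_sin.
- split.
  + by move=> x x0pi; exact/derivableN/derivable_cos.
  + by apply: cvgN; apply: cvg_at_right_filter; exact: continuous_cos.
  + by apply: cvgN; apply: cvg_at_left_filter; exact: continuous_cos.
  + by move=> x x0pi; rewrite derive1E deriveN// derive_val opprK.
Qed.

Lemma Iw_ge0 n : 0 <= Iw n.
Proof.
apply: Rintegral_ge0 => x; rewrite /= in_itv /= => /andP[x0 xp].
by rewrite exprn_ge0 // sin_ge0_pi // x0 xp.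
Qed.

Lemma Iw_decr n : Iw n.+1 <= Iw n.
Proof.
apply: le_Rintegral => //; try exact: Iw_int.
move=> x; rewrite /= in_itv /= => /andP[x0 xp].
have s0 : 0 <= sin x by rewrite sin_ge0_pi // x0 xp.
rewrite exprS ler_piMl // ?exprn_ge0 // sin_le1 //.
Qed.

Lemma Iw_prod n : (n.+1)%:R * Iw n.+1 * Iw n = 2 * pi.
Proof.
elim: n => [|n IH]; first by rewrite Iw1 Iw0 mul1r.
by rewrite Iw_red -IH; ring.
Qed.

Definition Wn (j : nat) : R := ('C(j.*2, j))%:R / 4 ^+ j.

Lemma bin_central_rec j : ('C(j.+1.*2, j.+1) * (j.+1.*2) = 4 * (j.*2.+1) * 'C(j.*2, j))%N.
Proof.
have h1 := mul_bin_diag (j.+1.*2) j.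
have h2 := mul_bin_diag (j.*2.+1) j.
have e : 'C(j.*2.+1, j.+1) = 'C(j.*2.+1, j).
  have hj : (j <= j.*2.+1)%N by rewrite -addnn; lia.
  by rewrite -(bin_sub hj); congr 'C(_, _); rewrite -addnn; lia.
rewrite e /= in h2.
rewrite doubleS /= in h1.
rewrite doubleS.
nia.
Qed.

Lemma Wn_rec j : Wn j.+1 * (j.+1.*2)%:R = Wn j * (j.*2.+1)%:R.
Proof.
rewrite /Wn exprS.
have h := congr1 (fun m : nat => (m%:R : R)) (bin_central_rec j).
rewrite /= !natrM in h.
have h4j : (4 : R) ^+ j != 0 by rewrite expf_neq0.
transitivity (('C(j.+1.*2, j.+1))%:R * (j.+1.*2)%:R / (4 * 4 ^+ j) : R); first by rewrite mulrAC.
by rewrite h; field.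
Qed.

Lemma Iw_even j : Iw j.*2 = pi * Wn j.
Proof.
elim: j => [|j IH]; first by rewrite Iw0 /Wn /= bin0 expr0 divr1 mulr1.
have h := Iw_red (j.*2).
have nz : (j.+1.*2)%:R != 0 :> R by rewrite pnatr_eq0 double_eq0.
apply: (mulIf nz).
rewrite -mulrA Wn_rec mulrA -IH mulrC.
by rewrite doubleS h mulrC.
Qed.

Lemma Iw_gt0 n : 0 < Iw n.
Proof.
rewrite lt_neqAle Iw_ge0 andbT; apply/eqP => h.
have := Iw_prod n; rewrite -h mulr0 => /esym/eqP.
by rewrite mulf_eq0 (negbTE (lt0r_neq0 (pi_gt0 R))) orbF pnatr_eq0.
Qed.

Lemma wallis j : (0 < j)%N ->
  pi * j%:R * Wn j ^+ 2 <= 1 /\ 2 <= (j.*2.+1)%:R * pi * Wn j ^+ 2.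
Proof.
move=> j0.
have pi0 := pi_gt0 R.
have W0 : 0 < Wn j by have := Iw_gt0 j.*2; rewrite Iw_even pmulr_rgt0.
have e2 : (j.*2)%:R = 2 * j%:R :> R by rewrite -muln2 natrM mulrC.
have e21 : (j.*2.+1)%:R = 2 * j%:R + 1 :> R by rewrite -natr1 e2.
split.
- have h1 : Iw j.*2 <= Iw j.*2.-1 by case: j j0 {W0 e2 e21} => // j _; exact: Iw_decr.
  have h2 : (j.*2)%:R * Iw j.*2 * Iw j.*2.-1 = 2 * pi.
    by case: j j0 {W0 e2 e21 h1} => // j _; exact: Iw_prod.
  have J : 0 < Iw j.*2.-1 by apply: Iw_gt0.
  rewrite Iw_even e2 in h1 h2.
  set J' := Iw j.*2.-1 in h1 h2 J.
  set W := Wn j in W0 h1 h2 *.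
  have h3 : 2 * j%:R * (pi * W) * (pi * W) <= 2 * pi.
    rewrite -h2; apply: ler_wpM2l => //.
    by rewrite mulr_ge0 // ?mulr_ge0 // ?ler0n // ltW // mulr_gt0.
  have h4 : pi * (2 * (pi * j%:R * W ^+ 2)) <= pi * (2 * 1).
    have -> : pi * (2 * (pi * j%:R * W ^+ 2)) = 2 * j%:R * (pi * W) * (pi * W) by rewrite expr2; ring.
    by rewrite mulr1 [X in _ <= X]mulrC.
  by rewrite ler_pM2l // ler_pM2l // in h4.
- have h1 := Iw_decr j.*2.
  have h2 := Iw_prod j.*2.
  rewrite Iw_even in h1 h2.
  have J := Iw_gt0 j.*2.+1.
  set J' := Iw j.*2.+1 in h1 h2 J.
  set W := Wn j in W0 h1 h2 *.
  have h3 : 2 * pi <= (j.*2.+1)%:R * (pi * W) * (pi * W).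
    rewrite -h2 mulrAC; apply: ler_wpM2l => //.
    by rewrite mulr_ge0 // ?ler0n // ltW // mulr_gt0.
  have h4 : pi * 2 <= pi * ((j.*2.+1)%:R * pi * W ^+ 2).
    have -> : pi * ((j.*2.+1)%:R * pi * W ^+ 2) = (j.*2.+1)%:R * (pi * W) * (pi * W) by rewrite expr2; ring.
    by rewrite mulrC.
  by rewrite ler_pM2l // in h4.
Qed.

Lemma sqrt_ratio (A q e : R) : 0 < A -> 0 < q -> 0 <= e ->
  A <= q ^+ 2 -> q ^+ 2 <= A * (1 + e) -> `|q / Num.sqrt A - 1| <= e.
Proof.
move=> A0 q0 e0 h1 h2.
have sA : 0 < Num.sqrt A by rewrite sqrtr_gt0.
set r := q / Num.sqrt A.
have r2 : r ^+ 2 = q ^+ 2 / A by rewrite /r expr_div_n sqr_sqrtr // ltW.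
have r0 : 0 <= r by rewrite /r divr_ge0 // ltW.
have r21 : 1 <= r ^+ 2 by rewrite r2 ler_pdivlMr // mul1r.
have r2e : r ^+ 2 <= 1 + e by rewrite r2 ler_pdivrMr // mulrC.
have r1 : 1 <= r.
  by rewrite -(@ler_pXn2r _ 2) ?expr1n // nnegrE.
rewrite ger0_norm ?subr_ge0 //.
have : (r - 1) * 1 <= (r - 1) * (r + 1).
  by apply: ler_wpM2l; rewrite ?subr_ge0 //; lra.
move: r2e; rewrite expr2; nra.
Qed.

Lemma bin_odd k : ('C(k.*2.+2, k.+1) = 2 * 'C(k.*2.+1, k.+1))%N /\ 'C(k.*2.+1, k) = 'C(k.*2.+1, k.+1).
Proof.
have e : 'C(k.*2.+1, k.+1) = 'C(k.*2.+1, k).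
  have hj : (k <= k.*2.+1)%N by rewrite -addnn; lia.
  by rewrite -(bin_sub hj); congr 'C(_, _); rewrite -addnn; lia.
split; last by rewrite e.
by rewrite binS e; lia.
Qed.

Lemma class_bound n c : (0 < n)%N -> (c <= n)%N -> (n <= c.*2.+1)%N -> (c.*2 <= n.+1)%N ->
  (0 : R) < (2 ^ n)%:R / ('C(n, c))%:R /\
  `|(2 ^ n)%:R / ('C(n, c))%:R / Num.sqrt (pi / 2 * n%:R) - 1| <= (2 : R) / n%:R.
Proof.
move=> n0 cn h1 h2.
have [j [j0 [hn hq]]] : exists j, (0 < j)%N /\ (n = j.*2 \/ n = j.*2.-1) /\ (2 ^ n)%:R / ('C(n, c))%:R = (Wn j)^-1 :> R.
  have [e|e|e] : [\/ n = c.*2, n = c.*2.-1 | n = c.*2.+1].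
  - have : (n == c.*2) || (n == c.*2.-1) || (n == c.*2.+1).
      by lia.
    by case/orP => [/orP[]|] /eqP; [constructor 1|constructor 2|constructor 3].
  - exists c; split; first by rewrite -double_gt0 -e.
    split; first by left.
    by rewrite /Wn invf_div e -mul2n natrX exprM (_ : (2:R)^+2 = 4) // expr2 -natrM.
  - exists c; split; first by case: c e {cn h1 h2} => // e; rewrite e in n0.
    split; first by right.
    case: c e {h1 h2 cn} => [e|k ->]; first by rewrite e in n0.
    have [b1 b2] := bin_odd k.
    rewrite /Wn invf_div doubleS /= b1 natrM.
    rewrite -(natrX _ 4) (_ : 4 ^ k.+1 = 2 * 2 ^ (k.*2.+1))%N; last first.
      by rewrite -expnS (_ : 4 = 2 ^ 2)%N // -expnM mul2n.
    have Cn : ('C(k.*2.+1, k.+1))%:R != 0 :> R by rewrite pnatr_eq0 -lt0n bin_gt0; lia.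
    by rewrite natrM; field.
  - exists c.+1; split; first by [].
    split; first by right.
    rewrite e.
    have [b1 b2] := bin_odd c.
    rewrite /Wn invf_div b1 b2 natrM.
    rewrite -(natrX _ 4) (_ : 4 ^ c.+1 = 2 * 2 ^ (c.*2.+1))%N; last first.
      by rewrite -expnS (_ : 4 = 2 ^ 2)%N // -expnM mul2n.
    have Cn : ('C(c.*2.+1, c.+1))%:R != 0 :> R by rewrite pnatr_eq0 -lt0n bin_gt0; lia.
    by rewrite natrM; field.
have [w1 w2] := wallis j0.
have pi0 := pi_gt0 R.
have W0 : 0 < Wn j by have := Iw_gt0 j.*2; rewrite Iw_even pmulr_rgt0.
rewrite hq; split; first by rewrite invr_gt0.
have nR : (0 : R) < n%:R by rewrite ltr0n.
apply: sqrt_ratio.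
- by rewrite mulr_gt0 // divr_gt0.
- by rewrite invr_gt0.
- by rewrite divr_ge0 // ltW.
- have jn : n%:R <= (j.*2)%:R :> R by rewrite ler_nat; case: hn => ->; lia.
  rewrite -muln2 natrM in jn.
  have w2p : 0 < Wn j ^+ 2 by rewrite exprn_gt0.
  rewrite exprVn -[(Wn j ^+ 2)^-1]mul1r ler_pdivlMr //.
  set w := Wn j in w1 w2 W0 w2p *.
  nra.
- have jn : (j.*2.+1)%:R <= n%:R + 2 :> R.
    by rewrite -natrD ler_nat; case: hn => ->; lia.
  have w2p : 0 < Wn j ^+ 2 by rewrite exprn_gt0.
  rewrite exprVn -[(Wn j ^+ 2)^-1]mul1r ler_pdivrMr //.
  have -> : (pi : R) / 2 * n%:R * (1 + 2 / n%:R) = pi / 2 * (n%:R + 2).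
    by field; rewrite gt_eqF.
  set w := Wn j in w1 w2 W0 w2p *.
  have := ler_wpM2r (ltW (mulr_gt0 pi0 w2p)) jn.
  move=> h. set P := pi * w ^+ 2 in h. have -> : pi / 2 * (n%:R + 2) * w ^+ 2 = (n%:R + 2) * P / 2 by rewrite /P; field. have w2p2 : 2 <= (j.*2.+1)%:R * P by rewrite /P mulrA. by rewrite ler_pdivlMr // mul1r; exact: le_trans w2p2 h.
Qed.
End Wallis.

Section Comb.
Variables (R : realType) (N d : nat) (lam : 'I_N -> 'I_d).
Hypothesis surj : forall k : 'I_d, exists i : 'I_N, lam i = k.

Local Notation sgT := {ffun 'I_N -> bool}.

Definition cnt (sg : sgT) (k : 'I_d) : nat := #|[set i | (lam i == k) && sg i]|.

Definition flip (sg : sgT) (i : 'I_N) : sgT := [ffun j => if j == i then ~~ sg j else sg j].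

Lemma csize_gt0 k : (0 < csize lam k)%N.
Proof. by have [i hi] := surj k; apply/card_gt0P; exists i; rewrite inE hi. Qed.

Lemma csizeR_neq0 k : (csize lam k)%:R != 0 :> R.
Proof. by rewrite pnatr_eq0 -lt0n csize_gt0. Qed.

Lemma card_sumR (T : finType) (P : pred T) : (#|[set i | P i]|)%:R = \sum_(i | P i) 1 :> R.
Proof.
rewrite sumr_const; congr (_%:R).
by apply: eq_card => i; rewrite inE.
Qed.

Lemma cnt_sum sg k : (cnt sg k)%:R = \sum_(i | lam i == k) (sg i)%:R :> R.
Proof.
rewrite /cnt card_sumR [RHS](bigID (fun i => sg i)) /= [X in _ = _ + X]big1 ?addr0.
  by apply: eq_bigr => i /andP[_ ->].
by move=> i /andP[_ /negbTE ->].
Qed.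

Lemma csize_sum k : (csize lam k)%:R = \sum_(i | lam i == k) 1 :> R.
Proof. by rewrite /csize card_sumR. Qed.

Lemma gammaE sg k : gamma R lam sg k = (2 * (cnt sg k)%:R - (csize lam k)%:R) / (csize lam k)%:R.
Proof.
rewrite ffunE cnt_sum csize_sum mulr_sumr -sumrB; congr (_ / _).
by apply: eq_bigr => i _; rewrite /spin; case: (sg i); rewrite /=; ring.
Qed.

Lemma cnt_flip sg i k : (cnt (flip sg i) k)%:R =
  (cnt sg k)%:R + (if lam i == k then (if sg i then -1 else 1) else 0) :> R.
Proof.
rewrite !cnt_sum.
case: ifP => hk.
  rewrite (bigD1 i) //= [in RHS](bigD1 i) //= ffunE eqxx.
  have -> : \sum_(j | (lam j == k) && (j != i)) ((flip sg i) j)%:R =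
            \sum_(j | (lam j == k) && (j != i)) (sg j)%:R :> R.
    by apply: eq_bigr => j /andP[_ /negbTE hj]; rewrite ffunE hj.
  by case: (sg i) => /=; ring.
rewrite addr0; apply: eq_bigr => j hj; rewrite ffunE; case: ifP => // /eqP ej.
by rewrite ej hk in hj.
Qed.

Lemma gamma_flip sg i : gamma R lam (flip sg i) = stepf lam (gamma R lam sg) (lam i, ~~ sg i).
Proof.
apply/ffunP => k; rewrite [RHS]ffunE !gammaE cnt_flip /= eq_sym.
case: eqP => [-> | _]; last by rewrite addr0 addr0.
have hn := csizeR_neq0 (lam i).
by rewrite /spin; case: (sg i) => /=; field.
Qed.

Lemma rate_gamma sg m : rate lam (gamma R lam sg) m =
  (#|[set i | (lam i, ~~ sg i) == m]|)%:R / N%:R.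
Proof.
case: m => k s.
have -> : (#|[set i | (lam i, ~~ sg i) == (k, s)]|)%:R =
   \sum_(i | lam i == k) ((~~ sg i) == s)%:R :> R.
  rewrite card_sumR [RHS](bigID (fun i => (~~ sg i) == s)) /= [X in _ = _ + X]big1 ?addr0.
    rewrite [RHS](eq_bigr (fun=> 1)); last by move=> i /andP[_ ->].
    by apply: eq_bigl => i; rewrite xpair_eqE.
  by move=> i /andP[_ /negbTE ->].
rewrite /rate /= gammaE.
have hn := csizeR_neq0 k.
have -> : \sum_(i | lam i == k) ((~~ sg i) == s)%:R =
  (if s then (csize lam k)%:R - (cnt sg k)%:R else (cnt sg k)%:R) :> R.
  rewrite cnt_sum csize_sum; case: s.
    by rewrite -sumrB; apply: eq_bigr => i _; case: (sg i) => /=; ring.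
  by apply: eq_bigr => i _; case: (sg i).
have hN : N%:R != 0 :> R by have [i _] := surj k; rewrite pnatr_eq0 -lt0n (leq_ltn_trans _ (ltn_ord i)).
by case: s; rewrite /spin; field; rewrite hN hn.
Qed.


Local Notation xT := {ffun 'I_d -> R}.
Local Notation mT := ('I_d * bool)%type.

Lemma lump sg (f : xT -> R) :
  \sum_(m : mT) rate lam (gamma R lam sg) m * f (stepf lam (gamma R lam sg) m) =
  N%:R^-1 * \sum_(i : 'I_N) f (gamma R lam (flip sg i)).
Proof.
rewrite (partition_big (fun i => (lam i, ~~ sg i)) xpredT) // mulr_sumr.
apply: eq_bigr => m _.
rewrite rate_gamma.
transitivity (N%:R^-1 * \sum_(i in [set i | (lam i, ~~ sg i) == m]) f (stepf lam (gamma R lam sg) m)).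
  by rewrite sumr_const -mulr_natr; ring.
congr (_ * _); rewrite big_mkcond [RHS]big_mkcond; apply: eq_bigr => i _.
by rewrite inE /=; case: eqP => // <-; rewrite gamma_flip.
Qed.

Lemma tail_rec (x z : xT) t : tail_prob lam x z t.+1 =
  \sum_(m : mT) rate lam x m * ((stepf lam x m != z)%:R * tail_prob lam (stepf lam x m) z t).
Proof.
rewrite /tail_prob.
rewrite (reindex (fun p : mT * t.-tuple mT => [tuple of p.1 :: p.2])) /=; last first.
  exists (fun ms : t.+1.-tuple mT => (thead ms, [tuple of behead ms])).
    by move=> [m ms] _ /=; rewrite theadE; congr (_, _); apply: val_inj.
  by move=> ms _ /=; rewrite [RHS]tuple_eta.
rewrite -(pair_big xpredT xpredT (fun m (ms : t.-tuple mT) =>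
  pathprob lam x [tuple of m :: ms] * (if all (fun y => y != z) (walk lam x [tuple of m :: ms]) then 1 else 0))) /=.
apply: eq_bigr => m _; rewrite !mulr_sumr; apply: eq_bigr => ms _ /=.
by case: (stepf lam x m != z) => /=; rewrite ?mul1r ?mul0r ?mulr0 ?mulrA.
Qed.

Lemma tail0 (x z : xT) : tail_prob lam x z 0 = 1.
Proof.
rewrite /tail_prob (big_pred1 [tuple]) /= ?mulr1 //.
by move=> ms; symmetry; apply/eqP; rewrite tuple0.
Qed.


Lemma flipK i : involutive (flip^~ i).
Proof. by move=> sg; apply/ffunP => j; rewrite !ffunE; case: eqP => // ->; rewrite negbK. Qed.

Lemma sum_flip (g : sgT -> R) i : \sum_(sg : sgT) g (flip sg i) = \sum_(sg : sgT) g sg.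
Proof. by rewrite [RHS](reindex_inj (inv_inj (flipK i))). Qed.

Lemma bin_up n c : (c.*2.+2 <= n)%N -> ('C(n, c) < 'C(n, c.+1))%N.
Proof.
move=> h.
have A0 : (0 < 'C(n, c))%N by rewrite bin_gt0; lia.
have h2 : (c.+1 * 'C(n, c) < c.+1 * 'C(n, c.+1))%N.
  by rewrite mul_bin_left ltn_pmul2r //; lia.
by rewrite ltn_pmul2l in h2.
Qed.

Lemma bin_down n c : (n.+2 <= c.*2)%N -> (c <= n)%N -> ('C(n, c) < 'C(n, c.-1))%N.
Proof.
case: c => [|c] h1 h2; first by move: h1; rewrite /=.
have B0 : (0 < 'C(n, c.+1))%N by rewrite bin_gt0.
have h3 : ((n - c) * 'C(n, c.+1) < (n - c) * 'C(n, c))%N.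
  by rewrite -mul_bin_left ltn_pmul2r //; lia.
rewrite ltn_pmul2l in h3 => //; lia.
Qed.

Lemma cnt_le sg k : (cnt sg k <= csize lam k)%N.
Proof. by apply: subset_leq_card; apply/fintype.subsetP => i; rewrite !inE => /andP[]. Qed.

Lemma cnt_flip_other sg i k : lam i != k -> cnt (flip sg i) k = cnt sg k.
Proof.
move=> h; apply/eqP; rewrite -(eqr_nat R) cnt_flip.
by rewrite (negbTE h) addr0.
Qed.

Lemma cnt_flip_same sg i : cnt (flip sg i) (lam i) =
  (if sg i then (cnt sg (lam i)).-1 else (cnt sg (lam i)).+1).
Proof.
apply/eqP; rewrite -(eqr_nat R) cnt_flip eqxx.
case hs: (sg i); last by rewrite -natr1.
have : (0 < cnt sg (lam i))%N by apply/card_gt0P; exists i; rewrite inE eqxx hs.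
by move=> /prednK {1}<-; rewrite -natr1 addrK.
Qed.

Lemma Qs_flip_gt sg i :
  ('C(csize lam (lam i), cnt sg (lam i)) < 'C(csize lam (lam i), cnt (flip sg i) (lam i)))%N ->
  Qs R lam sg < Qs R lam (flip sg i).
Proof.
move=> h; rewrite /Qs ltr_pM2l ?exprn_gt0 ?invr_gt0 //.
rewrite (bigD1 (lam i)) //= [X in _ < X](bigD1 (lam i)) //=.
have -> : \prod_(j < d | j != lam i) ('C(csize lam j, #|[set i0 | (lam i0 == j) && (flip sg i) i0]|))%:R =
   \prod_(j < d | j != lam i) ('C(csize lam j, #|[set i0 | (lam i0 == j) && sg i0]|))%:R :> R.
  by apply: eq_bigr => j hj; have := cnt_flip_other sg (i := i) (k := j); rewrite /cnt => ->; rewrite // eq_sym.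
rewrite ltr_pM2r ?ltr_nat //.
rewrite prodr_gt0 // => j _; rewrite ltr0n bin_gt0; exact: cnt_le.
Qed.

Lemma max_bounds sg0 : (forall sg, Qs R lam sg <= Qs R lam sg0) -> forall k,
  (csize lam k <= (cnt sg0 k).*2.+1)%N /\ ((cnt sg0 k).*2 <= (csize lam k).+1)%N.
Proof.
move=> hmax k; split; rewrite leqNgt; apply/negP => h.
- have [i /andP[/eqP hi hs]] : exists i, (lam i == k) && ~~ sg0 i.
    apply/existsP; apply: contraT => /existsPn hn.
    suff : cnt sg0 k = csize lam k by lia.
    apply: eq_card => i; rewrite !inE; have := hn i.
    by case: (lam i == k); case: (sg0 i).
  have := hmax (flip sg0 i); rewrite leNgt => /negP; apply.
  apply: Qs_flip_gt; rewrite cnt_flip_same (negbTE hs) hi.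
  by apply: bin_up; lia.
- have [i /andP[/eqP hi hs]] : exists i, (lam i == k) && sg0 i.
    have : (0 < cnt sg0 k)%N by lia.
    by case/card_gt0P => i; rewrite inE => hi; exists i.
  have := hmax (flip sg0 i); rewrite leNgt => /negP; apply.
  apply: Qs_flip_gt; rewrite cnt_flip_same hs hi.
  by apply: bin_down; [lia | exact: cnt_le].
Qed.

Section Kac.
Variable sg0 : sgT.
Hypothesis N0 : (0 < N)%N.
Local Notation z := (gamma R lam sg0).
Local Notation a t sg := (tail_prob lam (gamma R lam sg) z t).
Local Notation c t sg := ((gamma R lam sg != z)%:R * a t sg).

Lemma NR0 : N%:R != 0 :> R.
Proof. by rewrite pnatr_eq0 -lt0n. Qed.

Lemma a_rec t sg : a t.+1 sg = N%:R^-1 * \sum_(i : 'I_N) c t (flip sg i).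
Proof.
by rewrite tail_rec (lump sg (fun y => (y != z)%:R * tail_prob lam y z t)).
Qed.

Lemma sum_rec t : \sum_(sg : sgT) a t.+1 sg = \sum_(sg : sgT) c t sg.
Proof.
under eq_bigr do rewrite a_rec.
rewrite -mulr_sumr exchange_big /=.
under eq_bigr do rewrite (sum_flip (fun sg => c t sg)).
rewrite sumr_const card_ord -[X in _ * X]mulr_natl mulrA mulVf ?mul1r //; exact: NR0.
Qed.

Definition Mz : nat := #|[set sg : sgT | gamma R lam sg == z]|.

Lemma sum_c t : \sum_(sg : sgT) c t sg =
  \sum_(sg : sgT) a t sg - Mz%:R * tail_prob lam z z t.
Proof.
have e sg : c t sg = a t sg - (gamma R lam sg == z)%:R * tail_prob lam z z t.
  by case: eqP => [->|_] /=; rewrite ?mul0r ?mul1r ?subr0 ?subrr.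
rewrite (eq_bigr _ (fun sg _ => e sg)) sumrB -mulr_suml; congr (_ - _ * _).
rewrite /Mz card_sumR [RHS]big_mkcond /=; apply: eq_bigr => sg _.
by case: (_ == _).
Qed.

Lemma kac_partial T : Mz%:R * \sum_(t < T) tail_prob lam z z t =
  (2 ^ N)%:R - \sum_(sg : sgT) a T sg.
Proof.
elim: T => [|T IH].
  rewrite big_ord0 mulr0.
  under eq_bigr do rewrite tail0.
  by rewrite sumr_const card_ffun card_bool card_ord subrr.
by rewrite big_ord_recr /= mulrDr IH sum_rec sum_c; ring.
Qed.

Lemma a_bounds t sg : 0 <= a t sg <= 1.
Proof.
elim: t sg => [|t IH] sg; first by rewrite tail0 ler01 lexx.
rewrite a_rec.
have hN : 0 < N%:R :> R by rewrite ltr0n.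
apply/andP; split.
  rewrite mulr_ge0 ?invr_ge0 ?ler0n // sumr_ge0 // => i _.
  by rewrite mulr_ge0 ?ler0n //; case/andP: (IH (flip sg i)).
rewrite ler_pdivrMl // mulr1.
have -> : N%:R = \sum_(i < N) (1:R) by rewrite sumr_const card_ord.
apply: ler_sum => i _.
case/andP: (IH (flip sg i)) => h0 h1.
by case: (_ != _); rewrite ?mul1r ?mul0r.
Qed.

Lemma a_ge0 t sg : 0 <= a t sg. Proof. by case/andP: (a_bounds t sg). Qed.
Lemma a_le1 t sg : a t sg <= 1. Proof. by case/andP: (a_bounds t sg). Qed.

Lemma a_mono t sg : a t.+1 sg <= a t sg.
Proof.
elim: t sg => [|t IH] sg; first by rewrite tail0 a_le1.
rewrite [X in _ <= X]a_rec a_rec.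
rewrite ler_pM2l ?invr_gt0 ?ltr0n //.
apply: ler_sum => i _.
by apply: ler_wpM2l; rewrite ?ler0n.
Qed.

Lemma a_scale s : forall t (al : R), (forall sg, a t sg <= al) ->
  forall sg, a (t + s) sg <= al * a s sg.
Proof.
elim: s => [|s IH] t al h sg; first by rewrite addn0 tail0 mulr1.
rewrite addnS !a_rec mulrCA.
rewrite ler_pM2l ?invr_gt0 ?ltr0n // mulr_sumr.
apply: ler_sum => i _.
rewrite mulrCA; apply: ler_wpM2l; rewrite ?ler0n //.
exact: IH.
Qed.


Definition dist (sg : sgT) : nat := #|[set i | sg i != sg0 i]|.

Lemma dist0 sg : dist sg = 0%N -> sg = sg0.
Proof.
move=> /eqP; rewrite cards_eq0 => /eqP h; apply/ffunP => i.
apply/eqP; apply: contraT => hi.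
have : i \in [set i | sg i != sg0 i] by rewrite inE.
by rewrite h inE.
Qed.

Lemma dist_flip (sg : sgT) i : sg i != sg0 i -> dist (flip sg i) = (dist sg).-1.
Proof.
move=> hi; rewrite /dist.
rewrite (cardsD1 i [set j | sg j != sg0 j]) inE hi /= add0n.
apply: eq_card => j; rewrite !inE ffunE.
have [->|ne] := eqVneq j i; last by [].
by move: hi; case: (sg i); case: (sg0 i).
Qed.

Lemma dist_le sg : (dist sg <= N)%N.
Proof. by rewrite /dist -[X in (_ <= X)%N](card_ord N) max_card. Qed.

Lemma ind_le1 (sg : sgT) : (gamma R lam sg != z)%:R <= 1 :> R.
Proof. by case: (_ != _). Qed.

Lemma c_le_a t sg : c t sg <= a t sg.
Proof.
by case: (_ != _); rewrite ?mul1r ?mul0r ?a_ge0.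
Qed.

Lemma c_bound h : forall t sg, dist sg = h -> (h <= t)%N ->
  c t sg <= 1 - (N%:R^-1) ^+ h.
Proof.
elim: h => [|h IH] t sg hd ht.
  by rewrite (dist0 hd) eqxx mul0r expr0 subrr.
have [i hi] : exists i, sg i != sg0 i.
  have : (0 < dist sg)%N by rewrite hd.
  by case/card_gt0P => i; rewrite inE => hi; exists i.
case: t ht => // t ht.
apply: le_trans (c_le_a _ _) _.
rewrite a_rec (bigD1 i) //=.
have hN : 0 < N%:R :> R by rewrite ltr0n.
have h1 : c t (flip sg i) <= 1 - (N%:R^-1) ^+ h.
  by apply: IH => //; rewrite dist_flip // hd.
have h2 : \sum_(j < N | j != i) c t (flip sg j) <= N%:R - 1.
  have -> : N%:R - 1 = \sum_(j < N | j != i) (1 : R).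
    by rewrite sumr_const cardC1 card_ord -[in LHS](prednK N0) -natr1 addrK.
  apply: ler_sum => j _; apply: le_trans (c_le_a _ _) _; exact: a_le1.
rewrite ler_pdivrMl // exprS mulrBr mulr1 mulrA mulfV ?mul1r; last by rewrite gt_eqF.
apply: le_trans (lerD h1 h2) _.
by rewrite le_eqVlt; apply/orP; left; apply/eqP; ring.
Qed.

Lemma a_N1 sg : a N.+1 sg <= 1 - (N%:R^-1) ^+ N.
Proof.
rewrite a_rec.
have hN : 0 < N%:R :> R by rewrite ltr0n.
rewrite ler_pdivrMl //.
have -> : N%:R * (1 - N%:R^-1 ^+ N) = \sum_(i < N) (1 - N%:R^-1 ^+ N) :> R.
  by rewrite sumr_const card_ord mulr_natl.
apply: ler_sum => i _.
apply: le_trans (c_bound (erefl _) (dist_le _)) _.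
rewrite lerB // ler_wiXn2l ?dist_le // ?invr_ge0 ?ler0n //.
by rewrite invf_le1 // ler1n.
Qed.

Lemma a_decay k sg : a (k * N.+1) sg <= (1 - (N%:R^-1) ^+ N) ^+ k.
Proof.
have q0 : 0 <= 1 - (N%:R^-1) ^+ N :> R.
  by rewrite subr_ge0 exprn_ile1 // ?invr_ge0 ?ler0n // invf_le1 ?ltr0n // ler1n.
elim: k sg => [|k IH] sg; first by rewrite mul0n tail0 expr0.
rewrite mulSnr.
apply: le_trans (@a_scale N.+1 _ _ IH sg) _.
by rewrite exprS mulrC ler_wpM2r ?exprn_ge0 // a_N1.
Qed.


Lemma gamma_eq (s1 s2 : sgT) : (gamma R lam s1 == gamma R lam s2) = [forall k, cnt s1 k == cnt s2 k].
Proof.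
apply/eqP/forallP => [h k|h].
  have := congr1 (fun f : {ffun 'I_d -> R} => f k) h; rewrite /= !gammaE.
  move/(mulIf (invr_neq0 (csizeR_neq0 k)))/addIr/(mulrI (_ : (2:R) \is a GRing.unit)).
  by move=> /(_ (unitf_gt0 (ltr0n R 2)))/eqP; rewrite eqr_nat.
apply/ffunP => k; rewrite !gammaE; by rewrite (eqP (h k)).
Qed.

Lemma count_z : Mz = (\prod_(k < d) 'C(csize lam k, cnt sg0 k))%N.
Proof.
set c := cnt sg0.
pose phi (sg : sgT) : {ffun 'I_d -> {set 'I_N}} := [ffun k => [set i | (lam i == k) && sg i]].
pose F := fun k : 'I_d => [pred B : {set 'I_N} | (B \subset [set i | lam i == k]) && (#|B| == c k)].
have phiinj : injective phi.
  move=> s1 s2 /ffunP h; apply/ffunP => i; have := h (lam i); rewrite !ffunE => /setP /(_ i).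
  by rewrite !inE eqxx /= => ->.
have -> : Mz = #|[set sg : sgT | [forall k, cnt sg k == c k]]|.
  by apply: eq_card => sg; rewrite !inE gamma_eq.
rewrite -(card_imset _ phiinj).
transitivity #|family F|.
  apply: eq_card => B.
  apply/imsetP/familyP => [[sg hs ->] k|hB].
    rewrite ffunE /F inE; apply/andP; split.
      by apply/fintype.subsetP => i; rewrite !inE => /andP[].
    by rewrite inE in hs; move/forallP: hs => /(_ k).
  exists [ffun i => i \in B (lam i)].
    rewrite inE; apply/forallP => k.
    have -> : cnt [ffun i => i \in B (lam i)] k = #|B k|.
      rewrite /cnt; apply: eq_card => i; rewrite !inE ffunE.
      case: eqP => [<-|ne] //=.
      apply/esym/negbTE; apply/negP => iB.
      have /andP[/fintype.subsetP sB _] := hB k.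
      by have := sB i iB; rewrite inE => /eqP.
    by have /andP[_ ->] := hB k.
  apply/ffunP => k; rewrite ffunE; apply/setP => i; rewrite !inE ffunE.
  case: eqP => [<-|ne] //=.
  apply/negbTE; apply/negP => iB.
  have /andP[/fintype.subsetP sB _] := hB k.
  by have := sB i iB; rewrite inE => /eqP.
rewrite card_family foldrE big_map big_enum /=.
apply: eq_bigr => k _.
rewrite -cards_draws; apply: eq_card => B; by rewrite !inE.
Qed.

Lemma a_anti n k sg : a (n + k) sg <= a n sg.
Proof.
elim: k => [|k IH]; first by rewrite addn0.
by rewrite addnS; apply: le_trans (a_mono _ _) IH.
Qed.

Lemma Mz_gt0 : (0 < Mz)%N.
Proof. by apply/card_gt0P; exists sg0; rewrite inE. Qed.

Lemma kac : exp_hit lam z z = ((2 ^ N)%:R / Mz%:R)%:E.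
Proof.
have M0 : Mz%:R != 0 :> R by rewrite pnatr_eq0 -lt0n Mz_gt0.
pose B n := \sum_(sg : sgT) a n sg.
have SE n : \sum_(t < n) tail_prob lam z z t = ((2 ^ N)%:R - B n) / Mz%:R.
  by rewrite -kac_partial mulrC mulKf.
pose q : R := 1 - (N%:R^-1) ^+ N.
have hN : 0 < N%:R :> R by rewrite ltr0n.
have q0 : 0 <= q.
  by rewrite subr_ge0 exprn_ile1 // ?invr_ge0 ?ler0n // invf_le1 ?ltr0n // ler1n.
have q1 : q < 1 by rewrite /q ltrBlDr ltrDl exprn_gt0 // invr_gt0.
have B0 : (B @ \oo --> (0 : R))%classic.
  apply/cvgrPdist_le => e e0.
  have p0 : 0 < e / (2 ^ N)%:R by rewrite divr_gt0 // ltr0n expn_gt0.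
  have /cvgrPdist_le /(_ _ p0) := @cvg_expr _ q ltac:(by rewrite ger0_norm).
  case => K _ HK.
  exists (K * N.+1)%N => // n /= hn.
  rewrite sub0r normrN ger0_norm; last by rewrite sumr_ge0 // => sg _; exact: a_ge0.
  have hK := HK K (leqnn K); rewrite /= sub0r normrN ger0_norm ?exprn_ge0 // in hK.
  apply: (@le_trans _ _ (\sum_(sg : sgT) q ^+ K)).
    apply: ler_sum => sg _.
    rewrite -(subnKC hn); apply: le_trans (a_anti _ _ _) _; exact: a_decay.
  rewrite sumr_const card_ffun card_bool card_ord -mulr_natl.
  by rewrite -ler_pdivlMl ?ltr0n ?expn_gt0 // mulrC.
rewrite /exp_hit.
apply: cvg_lim => //.
have -> : (fun n => \sum_(0 <= i < n) (tail_prob lam z z i)%:E) =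
    (fun n => (((2 ^ N)%:R - B n) / Mz%:R)%:E).
  by apply: funext => n; rewrite sumEFin big_mkord SE.
apply: cvg_EFin; first by near=> n.
have -> : (2 ^ N)%:R / Mz%:R = ((2 ^ N)%:R - 0) / Mz%:R :> R by rewrite subr0.
apply: cvgM; last exact: cvg_cst.
apply: cvgB; first exact: cvg_cst.
exact: B0.
Unshelve. all: by end_near.
Qed.

End Kac.

End Comb.


Lemma sum_csize (N d : nat) (lam : 'I_N -> 'I_d) : (\sum_(k < d) csize lam k)%N = N.
Proof.
rewrite -[RHS]card_ord -sum1_card (partition_big lam xpredT) //=.
apply: eq_bigr => k _; rewrite /csize -sum1_card; apply: eq_bigl => i; by rewrite inE.
Qed.

Unset Implicit Arguments.

Theorem lemma2p6 (R : realType) :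
  exists C : R, 0 < C /\
  forall (N d : nat) (lam : 'I_N -> 'I_d),
    (0 < d)%N ->
    (forall k : 'I_d, exists i : 'I_N, lam i = k) ->
    forall sg0 : {ffun 'I_N -> bool},
      (forall sg : {ffun 'I_N -> bool}, Qs R lam sg <= Qs R lam sg0) ->
      exists eps : 'I_d -> R,
        (forall k : 'I_d, `|eps k| <= C / (csize lam k)%:R) /\
        exp_hit lam (gamma R lam sg0) (gamma R lam sg0) =
          (\prod_(k < d) (Num.sqrt (pi / 2 * (csize lam k)%:R) * (1 + eps k)))%:E.
Proof.
exists 2; split; first by [].
move=> N d lam d0 surj sg0 hmax.
have N0 : (0 < N)%N by have [i _] := surj (Ordinal d0); exact: (leq_ltn_trans (leq0n i) (ltn_ord i)).
pose q k : R := (2 ^ csize lam k)%:R / ('C(csize lam k, cnt lam sg0 k))%:R.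
exists (fun k => q k / Num.sqrt (pi / 2 * (csize lam k)%:R) - 1).
have CB k := @class_bound R _ _ (csize_gt0 surj k) (cnt_le lam sg0 k)
   (proj1 (max_bounds hmax k)) (proj2 (max_bounds hmax k)).
split; first by move=> k; case: (CB k).
rewrite (kac R surj sg0 N0) (count_z R surj sg0).
congr (_%:E).
have -> : \prod_(k < d) (Num.sqrt (pi / 2 * (csize lam k)%:R) *
     (1 + (q k / Num.sqrt (pi / 2 * (csize lam k)%:R) - 1))) = \prod_(k < d) q k.
  apply: eq_bigr => k _; rewrite addrC subrK mulrC divfK //.
  rewrite gt_eqF // sqrtr_gt0 mulr_gt0 // ?divr_gt0 ?pi_gt0 // ltr0n; exact: csize_gt0.
rewrite /q prodf_div -!natr_prod; congr (_ / _).
by rewrite -expn_sum sum_csize.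
Qed.
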